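(* The restrictions of $g$ to $\Omega_2$, $\Omega_3$ and $\Omega_-$ are Lipschitz on bounded sets. More precisely, for every $\bar M>0$ there is a constant $C(\bar M)$ such that $$|g(x)-g(\tilde x)|\le C(\bar M)\big(|Z-\tilde Z|+(|x_7|+|\tilde x_7|)|x_8-\tilde x_8|\big)$$ whenever $x,\tilde x$ both lie in $\Omega_2$, or both lie in $\Omega_3$, or both lie in $\Omega_-$, and all components of $x$ and $\tilde x$ are bounded in absolute value by $\bar M$. Here $Z=(x_4,x_5,x_6,x_7)$, $\tilde Z=(\tilde x_4,\tilde x_5,\tilde x_6,\tilde x_7)$.
   Context: For $x=(x_1,\dots,x_8)\in\mathbb R^8$ let $g_1(x)=|x_5|+2|x_7x_8|+2x_4$, $g_2(x)=x_4+x_6$, $\Omega_1=\{x: g_1(x)\le g_2(x),\ x_5\le0,\ x_7+x_8x_4=0\}$, and $g(x)=g_1(x)$ for $x\in\Omega_1$, $g(x)=g_2(x)$ otherwise. Let $\Omega_2=(\mathbb R^8\setminus\Omega_1)\cap\{x:x_7+x_8x_4=0\}$, $\Omega_3=\{x:x_7+x_8x_4\ne0\}$, $\Omega_-=\{x: x_5\le0,\ x_7+x_8x_4=0\}$. $|\cdot|$ denotes the Euclidean norm. (In the paper's notation $x=(y,\bar U,c,y_\xi,U_\xi,h,\bar r,k)$.) *)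

(* Defs.v *)
From Stdlib Require Import Reals.
Open Scope R_scope.

Record R8 := mk8 { x1 : R; x2 : R; x3 : R; x4 : R; x5 : R; x6 : R; x7 : R; x8 : R }.

Definition g1 (x : R8) : R := Rabs (x5 x) + 2 * Rabs (x7 x * x8 x) + 2 * x4 x.
Definition g2 (x : R8) : R := x4 x + x6 x.

Definition Omega1 (x : R8) : Prop :=
  g1 x <= g2 x /\ x5 x <= 0 /\ x7 x + x8 x * x4 x = 0.

(* g = g1 on Omega1, g2 otherwise (decided via the decidable real order/equality). *)
Definition g (x : R8) : R :=
  if Rle_dec (g1 x) (g2 x) then
    if Rle_dec (x5 x) 0 then
      if Req_EM_T (x7 x + x8 x * x4 x) 0 then g1 x else g2 x
    else g2 x
  else g2 x.

Definition Omega2 (x : R8) : Prop := ~ Omega1 x /\ x7 x + x8 x * x4 x = 0.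
Definition Omega3 (x : R8) : Prop := x7 x + x8 x * x4 x <> 0.
Definition Omega_minus (x : R8) : Prop := x5 x <= 0 /\ x7 x + x8 x * x4 x = 0.

Definition bounded_by (M : R) (x : R8) : Prop :=
  Rabs (x1 x) <= M /\ Rabs (x2 x) <= M /\ Rabs (x3 x) <= M /\ Rabs (x4 x) <= M /\
  Rabs (x5 x) <= M /\ Rabs (x6 x) <= M /\ Rabs (x7 x) <= M /\ Rabs (x8 x) <= M.

Definition distZ (x y : R8) : R :=
  sqrt ((x4 x - x4 y)^2 + (x5 x - x5 y)^2 + (x6 x - x6 y)^2 + (x7 x - x7 y)^2).

(* Main.v *)
Require Import Defs.
From Stdlib Require Import Reals Lra.
Open Scope R_scope.

Lemma abs_le_sqrt4 a b c d :
  Rabs a <= sqrt (a^2+b^2+c^2+d^2).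
Proof.
  rewrite <- sqrt_Rsqr_abs. apply sqrt_le_1_alt.
  unfold Rsqr. simpl. nra.
Qed.

Lemma dz4 x y : Rabs (x4 x - x4 y) <= distZ x y.
Proof. unfold distZ. apply abs_le_sqrt4. Qed.
Lemma dz5 x y : Rabs (x5 x - x5 y) <= distZ x y.
Proof. unfold distZ. replace ((x4 x - x4 y)^2 + (x5 x - x5 y)^2) with
  ((x5 x - x5 y)^2 + (x4 x - x4 y)^2) by ring. apply abs_le_sqrt4. Qed.
Lemma dz6 x y : Rabs (x6 x - x6 y) <= distZ x y.
Proof. unfold distZ. replace ((x4 x - x4 y)^2 + (x5 x - x5 y)^2 + (x6 x - x6 y)^2) with
  ((x6 x - x6 y)^2 + (x4 x - x4 y)^2 + (x5 x - x5 y)^2) by ring. apply abs_le_sqrt4. Qed.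
Lemma dz7 x y : Rabs (x7 x - x7 y) <= distZ x y.
Proof. unfold distZ. replace ((x4 x - x4 y)^2 + (x5 x - x5 y)^2 + (x6 x - x6 y)^2 + (x7 x - x7 y)^2) with
  ((x7 x - x7 y)^2 + (x4 x - x4 y)^2 + (x5 x - x5 y)^2 + (x6 x - x6 y)^2) by ring. apply abs_le_sqrt4. Qed.

Lemma g2_lip x y : Rabs (g2 x - g2 y) <= 2 * distZ x y.
Proof.
  unfold g2. pose proof (dz4 x y). pose proof (dz6 x y).
  pose proof (Rabs_triang (x4 x - x4 y) (x6 x - x6 y)).
  replace (x4 x + x6 x - (x4 y + x6 y)) with ((x4 x - x4 y) + (x6 x - x6 y)) by ring. lra.
Qed.

Lemma g1_lip M x y : bounded_by M x ->
  Rabs (g1 x - g1 y) <= (2*M+3) * distZ x y + 2 * ((Rabs (x7 x) + Rabs (x7 y)) * Rabs (x8 x - x8 y)).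
Proof.
  intros [_ [_ [_ [_ [_ [_ [_ Hx8]]]]]]].
  unfold g1. pose proof (dz4 x y) as D4. pose proof (dz5 x y) as D5. pose proof (dz7 x y) as D7.
  assert (H1 : Rabs (Rabs (x5 x) - Rabs (x5 y)) <= Rabs (x5 x - x5 y)) by apply Rabs_triang_inv2.
  assert (H2 : Rabs (Rabs (x7 x * x8 x) - Rabs (x7 y * x8 y)) <= Rabs (x7 x * x8 x - x7 y * x8 y)) by apply Rabs_triang_inv2.
  assert (H3 : Rabs (x7 x * x8 x - x7 y * x8 y) <= distZ x y * M + (Rabs (x7 x) + Rabs (x7 y)) * Rabs (x8 x - x8 y)).
  { replace (x7 x * x8 x - x7 y * x8 y) with ((x7 x - x7 y) * x8 x + x7 y * (x8 x - x8 y)) by ring.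
    eapply Rle_trans. apply Rabs_triang. rewrite !Rabs_mult.
    pose proof (Rabs_pos (x7 x)). pose proof (Rabs_pos (x8 x - x8 y)).
    pose proof (Rabs_pos (x7 x - x7 y)). pose proof (Rabs_pos (x7 y)).
    pose proof (Rabs_pos (x8 x)). apply Rplus_le_compat. apply Rmult_le_compat; auto; lra. apply Rmult_le_compat_r; lra. }
  pose proof (Rabs_pos (x5 x - x5 y)).
  assert (0 <= M) by (pose proof (Rabs_pos (x8 x)); lra).
  revert H1 H2 H3. generalize (Rabs (x5 x)) (Rabs (x5 y)) (Rabs (x7 x * x8 x)) (Rabs (x7 y * x8 y)).
  intros a b c d H1 H2 H3.
  assert (Rabs (a + 2*c + 2*x4 x - (b + 2*d + 2*x4 y)) <= Rabs (a-b) + (2*Rabs (c-d) + 2*Rabs (x4 x - x4 y))).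
  { replace (a + 2*c + 2*x4 x - (b + 2*d + 2*x4 y)) with ((a-b) + (2*(c-d) + 2*(x4 x - x4 y))) by ring.
    eapply Rle_trans. apply Rabs_triang. apply Rplus_le_compat_l.
    eapply Rle_trans. apply Rabs_triang. rewrite !Rabs_mult, Rabs_right by lra. lra. }
  nra.
Qed.

Theorem lemma4p2 :
  forall M : R, 0 < M ->
  exists C : R,
    forall x y : R8,
      ((Omega2 x /\ Omega2 y) \/ (Omega3 x /\ Omega3 y) \/
       (Omega_minus x /\ Omega_minus y)) ->
      bounded_by M x -> bounded_by M y ->
      Rabs (g x - g y) <=
        C * (distZ x y + (Rabs (x7 x) + Rabs (x7 y)) * Rabs (x8 x - x8 y)).
Proof.
  intros M HM. exists (2*M+5). intros x y H Bx By.
  pose proof (g2_lip x y) as L2. pose proof (g1_lip M x y Bx) as L1.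
  assert (HD : 0 <= distZ x y) by apply sqrt_pos.
  assert (HE : 0 <= (Rabs (x7 x) + Rabs (x7 y)) * Rabs (x8 x - x8 y)).
  { pose proof (Rabs_pos (x7 x)). pose proof (Rabs_pos (x7 y)). pose proof (Rabs_pos (x8 x - x8 y)). nra. }
  assert (Hg2 : forall z, (Omega2 z \/ Omega3 z) -> g z = g2 z).
  { intros z Hz. unfold g. destruct (Rle_dec (g1 z) (g2 z)); auto.
    destruct (Rle_dec (x5 z) 0); auto. destruct (Req_EM_T (x7 z + x8 z * x4 z) 0); auto.
    exfalso. destruct Hz as [[Hn _]|Hn]; apply Hn; unfold Omega1; auto. }
  assert (K2 : Rabs (g2 x - g2 y) <= (2*M+5) * (distZ x y + (Rabs (x7 x) + Rabs (x7 y)) * Rabs (x8 x - x8 y))) by nra.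
  assert (K1 : Rabs (g1 x - g1 y) <= (2*M+5) * (distZ x y + (Rabs (x7 x) + Rabs (x7 y)) * Rabs (x8 x - x8 y))) by nra.
  clear L1 L2.
  destruct H as [[Hx Hy]|[[Hx Hy]|[Hx Hy]]].
  - rewrite !Hg2 by auto. exact K2.
  - rewrite !Hg2 by auto. exact K2.
  - assert (Hm : forall z, Omega_minus z -> g z = if Rle_dec (g1 z) (g2 z) then g1 z else g2 z).
    { intros z [H5 H7]. unfold g. destruct (Rle_dec (g1 z) (g2 z)); auto.
      destruct (Rle_dec (x5 z) 0); [|contradiction].
      destruct (Req_EM_T (x7 z + x8 z * x4 z) 0); [auto|contradiction]. }
    rewrite !Hm by auto.
    destruct (Rle_dec (g1 x) (g2 x)); destruct (Rle_dec (g1 y) (g2 y));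
    revert K1 K2; generalize ((2*M+5) * (distZ x y + (Rabs (x7 x) + Rabs (x7 y)) * Rabs (x8 x - x8 y))); intros K K1 K2; unfold Rabs in *; repeat destruct Rcase_abs; lra.
Qed.
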